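(* Let $n\geq 4$ and let $F_n=\{0,a_1,\ldots,a_{n-2},1\}$ be the meet-semilattice of order $n$ with least element $0$, greatest element $1$, and $a_1,\ldots,a_{n-2}$ pairwise incomparable. Write $a_0=0$ and $a_{n-1}=1$. Then for each $i\in\{1,\ldots,n-2\}$, \[ \mathrm{cov}_1(a_i)=\{xa_j=xa_k\mid j,k\in\{0,1,\ldots,n-2\}\setminus\{i\}\}\cup\{xa_j=xa_k\mid j,k\in\{i,n-1\}\}, \] and $|\mathrm{cov}_1(a_i)|=(n-2)^2+4$.
   Context: The meet is written as multiplication. An equation of the first kind in one variable $x$ over a semilattice $S$ is a formal expression $xa=xa'$ with $a,a'\in S$; formally it is the ordered pair $(a,a')$. An element $s$ satisfies $xa=xa'$ if $sa=sa'$. $\mathrm{cov}_1(s)$ is the set of equations of this form satisfied by $s$. *)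

(* Defs.v *)
From mathcomp Require Import all_boot.
Set Implicit Arguments. Unset Strict Implicit. Unset Printing Implicit Defensive.

(* The meet-semilattice F_n = {0, a_1, ..., a_{n-2}, 1} is represented on the
   carrier 'I_n: the ordinal j stands for a_j, with a_0 = 0 (least element),
   a_{n-1} = 1 (greatest element), and a_1, ..., a_{n-2} pairwise incomparable. *)

Definition Fn_le (n : nat) (x y : 'I_n) : bool :=
  [|| x == y, val x == 0 | val y == n.-1].

Definition Fn_meet (n : nat) (x y : 'I_n) : 'I_n :=
  if x == y then x
  else if val x == n.-1 then y
  else if val y == n.-1 then x
  else if val x == 0 then x
  else if val y == 0 then y
  else [arg min_(z < x) val z]. (* = a_0 = 0, the only common lower bound *)

(* An equation of the first kind x a = x a' is the ordered pair (a, a');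
   cov_1(s) is the set of such equations satisfied by s. *)
Definition cov1 (n : nat) (s : 'I_n) : {set 'I_n * 'I_n} :=
  [set e : 'I_n * 'I_n | Fn_meet s e.1 == Fn_meet s e.2].

(* Main.v *)
Require Import Defs.
From mathcomp Require Import all_boot.
From mathcomp Require Import zify.

Theorem lemma4 (n : nat) (hn : 4 <= n) (i : 'I_n) (hi : 1 <= val i <= n - 2) :
  cov1 i =
    [set e : 'I_n * 'I_n |
       ((val e.1 <= n - 2) && (e.1 != i) && (val e.2 <= n - 2) && (e.2 != i))
       || (((e.1 == i) || (val e.1 == n - 1)) && ((e.2 == i) || (val e.2 == n - 1)))]
  /\ #|cov1 i| = (n - 2) ^ 2 + 4.
Proof.
have n0 : 0 < n by lia.
have nt : n.-1 < n by lia.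
pose z : 'I_n := Ordinal n0.
pose top : 'I_n := Ordinal nt.
have zv : val z = 0 by [].
have tv : val top = n.-1 by [].
have Hm : forall e : 'I_n, Fn_meet i e = if (e == i) || (val e == n.-1) then i else z.
  move=> e; rewrite /Fn_meet.
  case: (eqVneq i e) => [->|ne] /=; first by [].
  move: ne; rewrite eq_sym => ne.
  rewrite /=.
  have -> : (val i == n.-1) = false by apply/negbTE; lia.
  case: ifP => // _.
  have -> : (val i == 0) = false by apply/negbTE; lia.
  case: ifP => [/eqP e0|_]; first by apply/val_inj.
  case: arg_minnP => // m _ Hmin; apply/val_inj => /=.
  have := Hmin z isT; rewrite /=; lia.
have iz : i != z.
  apply/eqP => /(congr1 val); rewrite zv. by move=> h; move: hi; rewrite h.
have Hc : cov1 i = [set e : 'I_n * 'I_n |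
   ((e.1 == i) || (val e.1 == n.-1)) == ((e.2 == i) || (val e.2 == n.-1))].
  apply/setP => e; rewrite !inE !Hm.
  by do 2 case: ((_ == i) || _); rewrite ?eqxx // ?(negbTE iz) // eq_sym (negbTE iz).
split.
  rewrite Hc; apply/setP => -[a b]; rewrite !inE /=.
  have ha := ltn_ord a; have hb := ltn_ord b.
  case: (eqVneq a i) => [->|na]; case: (eqVneq b i) => [->|nb] /=; rewrite ?eqxx /=; lia.
pose B : {set 'I_n} := [set i; top].
have HB : forall e : 'I_n, (e \in B) = (e == i) || (val e == n.-1).
  move=> e; rewrite !inE; congr (_ || _); apply/eqP/eqP => [->//|h]; exact: val_inj.
have -> : cov1 i = setX B B :|: setX (~: B) (~: B).
  rewrite Hc; apply/setP => -[a b]; rewrite !inE /= -!HB.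
  by case: (a \in B); case: (b \in B).
rewrite cardsU.
have -> : setX B B :&: setX (~: B) (~: B) = set0.
  apply/setP => -[a b]; rewrite in_setI in_set0 !in_setX !in_setC /=; by case: (a \in B); case: (b \in B).
have itop : i != top by apply/eqP => /(congr1 val); rewrite tv => h; move: hi; rewrite h; lia.
have hB : #|B| = 2 by rewrite cards2 itop.
have hC : #|~: B| = n - 2 by rewrite cardsCs setCK card_ord hB.
rewrite cards0 subn0 !cardsX hB hC.
rewrite expnS expn1 addnC; lia.
Qed.
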